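(* Let $r\ge5$. There is a constant $C$ depending only on $r$ such that for every $K_r$-tree $T$ and every $S\subseteq V(T)$, and for any run of the $(r-2)_*$-BP process on $T$ with seed set $S$, we have $|\langle S;T\rangle_*|\le C|S|$.
   Context: A graph $T$ is a $K_r$-tree if it is the union of copies $H_1,\dots,H_\vartheta$ of $K_r$ such that for each $1<i\le\vartheta$, $H_i$ shares exactly one edge with $H_1\cup\cdots\cup H_{i-1}$ (the common vertices being exactly the two endpoints of that edge). An edge of $T$ is internal if it lies in at least two of the $H_i$. The $(r-2)_*$-bootstrap percolation process on $T$ with seed set $S\subseteq V(T)$: initially the vertices of $S$ are infected; in each step, either (usual step) some uninfected vertex with at least $r-2$ infected neighbors in $T$ becomes infected; or else (special step), if no usual step is possible but for some internal edge $f$ there are two copies $H_i\ne H_j$ containing $f$ such that $H_i$ has $r-4$ infected vertices and $H_j$ has $1$ infected vertex, all these $r-3$ vertices not in $f$, then an arbitrarily chosen vertex $u\in f$ becomes infected; otherwise the process terminates. $\langle S;T\rangle_*$ is the set of eventually infected vertices. *)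

(* Defs.v *)
From mathcomp Require Import all_boot.
Set Implicit Arguments. Unset Strict Implicit. Unset Printing Implicit Defensive.

(* A K_r-tree is given by the list Hs = [H_1; ...; H_theta] of the vertex sets
   of its copies of K_r, inside an ambient finite type V.  The graph T has
   vertex set the union of the H_i and edge set all pairs {x,y}, x != y,
   lying together in some H_i. *)

Definition copy (V : finType) (Hs : seq {set V}) (i : nat) : {set V} :=
  nth set0 Hs i.

Definition tree_vertices (V : finType) (Hs : seq {set V}) : {set V} :=
  \bigcup_(H <- Hs) H.

Definition tadj (V : finType) (Hs : seq {set V}) (x y : V) : bool :=
  (x != y) && has (fun H : {set V} => (x \in H) && (y \in H)) Hs.

(* H_1 u ... u H_{i} (0-based: copies with index < i) *)
Definition prefix_vertices (V : finType) (Hs : seq {set V}) (i : nat) : {set V} :=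
  \bigcup_(j < i) copy Hs j.

Definition is_Kr_tree (r : nat) (V : finType) (Hs : seq {set V}) : Prop :=
  (forall i, i < size Hs -> #|copy Hs i| = r) /\
  (forall i, 0 < i < size Hs ->
     exists a b : V, [/\ a != b,
       copy Hs i :&: prefix_vertices Hs i = [set a; b] &
       exists2 j, j < i & (a \in copy Hs j) && (b \in copy Hs j)]).

Definition usual_ok (r : nat) (V : finType) (Hs : seq {set V}) (A : {set V}) (u : V) : bool :=
  (u \notin A) && (r - 2 <= #|[set w in A | tadj Hs w u]|).

Definition special_ok (r : nat) (V : finType) (Hs : seq {set V}) (A : {set V}) (u : V) : Prop :=
  exists i j (a b : V),
    [/\ i < size Hs, j < size Hs, i != j, a != b &
    [/\ [&& a \in copy Hs i, b \in copy Hs i, a \in copy Hs j & b \in copy Hs j],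
        u \in [set a; b],
        #|copy Hs i :&: A| = r - 4,
        #|copy Hs j :&: A| = 1 &
        [disjoint (copy Hs i :|: copy Hs j) :&: A & [set a; b]]]].

Definition bp_step (r : nat) (V : finType) (Hs : seq {set V}) (A : {set V}) (u : V) : Prop :=
  usual_ok r Hs A u \/ ((forall w, ~~ usual_ok r Hs A w) /\ special_ok r Hs A u).

(* a (partial) run: the sequence of vertices infected in order *)
Fixpoint valid_run (r : nat) (V : finType) (Hs : seq {set V}) (A : {set V}) (s : seq V) : Prop :=
  match s with
  | [::] => True
  | u :: s' => bp_step r Hs A u /\ valid_run r Hs (u |: A) s'
  end.

Definition terminated (r : nat) (V : finType) (Hs : seq {set V}) (A : {set V}) : Prop :=
  (forall w, ~~ usual_ok r Hs A w) /\ (forall u, ~ special_ok r Hs A u).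

Definition final_set (V : finType) (S : {set V}) (s : seq V) : {set V} :=
  S :|: [set x in s].

(* Main.v *)
Require Import Defs.
From mathcomp Require Import all_boot zify.
Set Implicit Arguments. Unset Strict Implicit. Unset Printing Implicit Defensive.


Lemma set2_sub (T : finType) (a b p q y : T) : a != b -> a \in [set p; q] -> b \in [set p; q] ->
  y \in [set p; q] -> y \in [set a; b].
Proof.
rewrite !in_set2 => ab /orP[]/eqP ea /orP[]/eqP eb /orP[]/eqP ey; subst;
  rewrite ?eqxx ?orbT //; by rewrite eqxx in ab.
Qed.

Lemma set2_three (T : finType) (a b x p q : T) : a != b -> x != a -> x != b ->
  a \in [set p; q] -> b \in [set p; q] -> x \in [set p; q] -> False.
Proof.
rewrite !in_set2 => ab xa xb /orP[]/eqP ea /orP[]/eqP eb /orP[]/eqP ex; subst;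
  by rewrite ?eqxx in ab xa xb.
Qed.

Section Tree.
Variables (r : nat) (V : finType) (Hs : seq {set V}).

Definition newv i := copy Hs i :\: prefix_vertices Hs i.

Lemma prefix0 : prefix_vertices Hs 0 = set0.
Proof. by rewrite /prefix_vertices big_ord0. Qed.

Lemma copy_sub_prefix i j : i < j -> copy Hs i \subset prefix_vertices Hs j.
Proof.
move=> ij; rewrite /prefix_vertices.
exact: (bigcup_sup (Ordinal ij)).
Qed.

Lemma in_prefix x j : x \in prefix_vertices Hs j -> exists2 i, i < j & x \in copy Hs i.
Proof.
by rewrite /prefix_vertices => /bigcupP [[i hi] _ hx]; exists i.
Qed.

Lemma tadjP x y : reflect (x != y /\ exists2 i, i < size Hs & (x \in copy Hs i) && (y \in copy Hs i)) (tadj Hs x y).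
Proof.
rewrite /tadj; apply: (iffP andP) => [[xy /hasP [H HH hxy]]|[xy [i hi hxy]]]; split => //.
  exists (index H Hs); first by rewrite index_mem.
  by rewrite /copy nth_index.
by apply/hasP; exists (copy Hs i) => //; rewrite /copy mem_nth.
Qed.

Lemma tree_verticesP x : reflect (exists2 i, i < size Hs & x \in copy Hs i) (x \in tree_vertices Hs).
Proof.
have -> : (x \in tree_vertices Hs) = has (fun H : {set V} => x \in H) Hs.
  rewrite /tree_vertices; elim: Hs => [|H s IH]; first by rewrite big_nil in_set0.
  by rewrite big_cons in_setU IH.
apply: (iffP hasP) => [[H HH hx]|[i hi hx]].
  by exists (index H Hs); rewrite ?index_mem // /copy nth_index.
by exists (copy Hs i) => //; rewrite /copy mem_nth.
Qed.


Hypothesis hT : is_Kr_tree r Hs.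
Hypothesis hr : 5 <= r.

Lemma copy_card i : i < size Hs -> #|copy Hs i| = r.
Proof. by case: hT => h _; apply: h. Qed.

Lemma cap_prefix i : 0 < i < size Hs -> exists a b : V, [/\ a != b,
       copy Hs i :&: prefix_vertices Hs i = [set a; b] & tadj Hs a b].
Proof.
move=> hi; case: hT => _ /(_ i hi) [a [b [ab e [j ji /andP[ha hb]]]]].
exists a, b; split => //; apply/tadjP; split => //; exists j => //.
  by case/andP: hi => _; apply: ltn_trans.
by rewrite ha hb.
Qed.

Lemma cap_prefix_card i : i < size Hs -> #|copy Hs i :&: prefix_vertices Hs i| <= 2.
Proof.
case: i => [|i] hi; first by rewrite prefix0 setI0 cards0.
have [a [b [ab -> _]]] := cap_prefix (i := i.+1) hi.
by rewrite cards2 ab.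
Qed.

Lemma newv_card i : i < size Hs -> r - 2 <= #|newv i|.
Proof.
move=> hi; have := cardsID (prefix_vertices Hs i) (copy Hs i).
rewrite copy_card // -/(newv i) => e; have := cap_prefix_card hi; lia.
Qed.

Lemma newv_n0 i : i < size Hs -> exists x, x \in newv i.
Proof.
move=> hi; have := newv_card hi => h; apply/set0Pn; rewrite -card_gt0; lia.
Qed.

Lemma newv_sub i : newv i \subset copy Hs i.
Proof. exact: subsetDl. Qed.

Lemma newv_disj i j x : i < j -> x \in newv i -> x \notin newv j.
Proof.
move=> ij /setDP [hx _]; apply/negP => /setDP [_ /negP []].
exact: (subsetP (copy_sub_prefix ij)).
Qed.

Lemma two_copies_lt i j a b : i < j -> j < size Hs -> a != b ->
  a \in copy Hs i -> b \in copy Hs i -> a \in copy Hs j -> b \in copy Hs j ->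
  copy Hs i :&: copy Hs j \subset [set a; b].
Proof.
move=> ij js ab ai bi aj bj.
have j0 : 0 < j < size Hs by rewrite js andbT; case: (i) ij => // *; lia.
have [p [q [pq e _]]] := cap_prefix j0.
have sub := copy_sub_prefix ij.
have mem y : y \in copy Hs i -> y \in copy Hs j -> y \in [set p; q].
  by move=> yi yj; rewrite -e inE yj (subsetP sub).
apply/subsetP => y /setIP [yi yj].
by apply: (set2_sub ab (mem _ ai aj) (mem _ bi bj) (mem _ yi yj)).
Qed.

Lemma two_copies i j a b : i < size Hs -> j < size Hs -> i != j -> a != b ->
  a \in copy Hs i -> b \in copy Hs i -> a \in copy Hs j -> b \in copy Hs j ->
  copy Hs i :&: copy Hs j \subset [set a; b].
Proof.
move=> hi hj; rewrite neq_ltn => /orP [ij|ji] ab ai bi aj bj.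
  exact: two_copies_lt.
rewrite setIC; exact: two_copies_lt.
Qed.

Lemma three_new i a b x (X : {set V}) : i < size Hs -> a != b -> x != a -> x != b ->
  a \in copy Hs i -> b \in copy Hs i -> x \in copy Hs i ->
  a \in X -> b \in X -> x \in X -> newv i :&: X != set0.
Proof.
move=> hi ab xa xb ai bi xi aX bX xX.
case: i hi ai bi xi => [|i] hi ai bi xi.
  by apply/set0Pn; exists a; rewrite !inE prefix0 inE ai aX.
have [p [q [pq e _]]] := cap_prefix (i := i.+1) hi.
apply/set0Pn.
case aP: (a \in prefix_vertices Hs i.+1); last by exists a; rewrite !inE aP ai aX.
case bP: (b \in prefix_vertices Hs i.+1); last by exists b; rewrite !inE bP bi bX.
case xP: (x \in prefix_vertices Hs i.+1); last by exists x; rewrite !inE xP xi xX.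
exfalso; apply: (@set2_three _ a b x p q ab xa xb); rewrite -e inE ?aP ?bP ?xP ?ai ?bi ?xi //.
Qed.

End Tree.

Lemma arith (r n e h : nat) (b : bool) : 5 <= r -> n <= r - h -> e <= h -> (h = 0 \/ h = 2) ->
  (n == r - h) && (e == h) ==> b ->
  n * (n + e) - n + e * n + 2 * (0 < n) <= (r + 1) * n + 2 * b.
Proof.
move=> r5 hn he [] hh; subst h.
  have -> : e = 0 by lia.
  case: n hn => [|n] hn /=; first lia.
  case: b => _; nia.
case: b => [_|H].
  case: n hn => [|n] hn /=; nia.
have {H} : (n < r - 2) || (e < 2) by move: H; rewrite implybF; lia.
case: n hn => [|n] hn /=; first lia.
case/orP => h.
  have : n.+1 <= r - 3 by lia. 
  case: e he => [|[|[|e0]]] he' //= _; nia.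
have : e <= 1 by lia. nia.
Qed.


Definition E2 (V : finType) (Hs : seq {set V}) (X : {set V}) :=
  #|[set p : V * V | [&& p.1 \in X, p.2 \in X & tadj Hs p.1 p.2]]|.
Definition N1 (V : finType) (Hs : seq {set V}) (X : {set V}) :=
  \sum_(i < size Hs) (newv Hs i :&: X != set0).
Definition FF (V : finType) (Hs : seq {set V}) (X : {set V}) :=
  \sum_(i < size Hs) (copy Hs i \subset X).

Section Rcons.
Variables (V : finType) (Hs : seq {set V}) (H : {set V}).

Lemma copy_rcons i : i < size Hs -> copy (rcons Hs H) i = copy Hs i.
Proof. by move=> hi; rewrite /copy nth_rcons hi. Qed.

Lemma copy_rcons_last : copy (rcons Hs H) (size Hs) = H.
Proof. by rewrite /copy nth_rcons ltnn eqxx. Qed.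

Lemma prefix_rcons i : i <= size Hs -> prefix_vertices (rcons Hs H) i = prefix_vertices Hs i.
Proof.
move=> hi; apply: eq_bigr => j _; apply: copy_rcons; exact: leq_trans (ltn_ord j) hi.
Qed.

Lemma prefix_last : prefix_vertices Hs (size Hs) = tree_vertices Hs.
Proof.
apply/setP => x; apply/idP/idP.
  by case/in_prefix => i hi hx; apply/tree_verticesP; exists i.
by case/tree_verticesP => i hi hx; apply: (subsetP (copy_sub_prefix Hs hi)).
Qed.

Lemma tree_rcons : tree_vertices (rcons Hs H) = tree_vertices Hs :|: H.
Proof.
apply/setP => x; rewrite inE; apply/tree_verticesP/orP.
  case=> i; rewrite size_rcons ltnS leq_eqVlt => /orP [/eqP ->|hi].
    by rewrite copy_rcons_last; right.
  by rewrite copy_rcons // => hx; left; apply/tree_verticesP; exists i.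
case=> [/tree_verticesP [i hi hx]|hx].
  by exists i; rewrite ?size_rcons ?copy_rcons // ltnW.
by exists (size Hs); rewrite ?size_rcons ?copy_rcons_last.
Qed.

Lemma tadj_rcons x y : tadj (rcons Hs H) x y = tadj Hs x y || [&& x != y, x \in H & y \in H].
Proof. by rewrite /tadj has_rcons; case: (x != y) => //=; rewrite orbC. Qed.

Lemma tree_rcons_inv r : is_Kr_tree r (rcons Hs H) -> is_Kr_tree r Hs.
Proof.
case=> h1 h2; split.
  by move=> i hi; rewrite -copy_rcons // h1 // size_rcons ltnS ltnW.
move=> i /andP [i0 hi].
have := h2 i; rewrite size_rcons ltnS (ltnW hi) i0 => /(_ isT) [a [b [ab e [j ji hj]]]].
exists a, b; split => //.
  by rewrite -copy_rcons // -prefix_rcons // ltnW.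
by exists j => //; rewrite -!copy_rcons // (ltn_trans ji hi).
Qed.

Lemma sum_rcons (f : {set V} -> {set V} -> bool) :
  \sum_(i < size (rcons Hs H)) f (copy (rcons Hs H) i) (prefix_vertices (rcons Hs H) i) =
  \sum_(i < size Hs) f (copy Hs i) (prefix_vertices Hs i) + f H (tree_vertices Hs).
Proof.
rewrite size_rcons big_ord_recr /= copy_rcons_last prefix_rcons // prefix_last.
congr (_ + _); apply: eq_bigr => i _ /=.
by rewrite copy_rcons // prefix_rcons // ltnW.
Qed.

End Rcons.

Lemma tadj_sym (V : finType) (Hs : seq {set V}) x y : tadj Hs x y = tadj Hs y x.
Proof.
rewrite /tadj eq_sym; congr (_ && _); apply: eq_in_has => H _; exact: andbC.
Qed.


Lemma attach_last r (V : finType) (Hs : seq {set V}) H : is_Kr_tree r (rcons Hs H) -> 0 < size Hs ->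
  exists a b, [/\ a != b, H :&: tree_vertices Hs = [set a; b] & tadj Hs a b].
Proof.
case=> _ /(_ (size Hs)); rewrite size_rcons ltnSn andbT => h /h [a [b [ab e [j ji /andP [ha hb]]]]].
exists a, b; split => //.
  by rewrite -e copy_rcons_last prefix_rcons // prefix_last.
apply/tadjP; split => //; exists j => //.
by rewrite -(copy_rcons H ji) ha hb.
Qed.

Lemma diag_card (V : finType) (A : {set V}) : #|[set (x, x) | x in A]| = #|A|.
Proof. by apply: card_imset => x y [->]. Qed.

Lemma lin1 (E E' N D A B C F : nat) (b1 b2 : bool) : A + B + 2 * b1 <= C + 2 * b2 ->
  E + 2 * N <= D + 2 * F ->
  E' <= E + A + B ->
  E' + (2 * N + 2 * b1) <= D + C + 2 * (F + b2).
Proof. move=> *. lia. Qed.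

Lemma lin2 (N a n : nat) : N <= a -> N + (0 < n) <= a + n.
Proof. case: n => [|n] /=; lia. Qed.
Lemma lin3 (a N n r h : nat) : a <= r * N -> n <= r - h -> a + n <= r * (N + (0 < n)).
Proof. rewrite mulnDr; case: n => [|n] /=; lia. Qed.
Lemma lin4 (F N : nat) (b c : bool) : F <= N -> b ==> c -> F + b <= N + c.
Proof. case: b; case: c => //=; lia. Qed.

Lemma static r (V : finType) (Hs : seq {set V}) : 5 <= r -> is_Kr_tree r Hs -> forall X,
  [/\ E2 Hs X + 2 * N1 Hs X <= (r+1) * #|X :&: tree_vertices Hs| + 2 * FF Hs X,
      N1 Hs X <= #|X :&: tree_vertices Hs|,
      #|X :&: tree_vertices Hs| <= r * N1 Hs X &
      FF Hs X <= N1 Hs X].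
Proof.
move=> r5; elim/last_ind: Hs => [|Hs H IH] hT X.
  have E0 : E2 [::] X = 0.
    by rewrite /E2; apply/eqP; rewrite cards_eq0; apply/eqP/setP => p; rewrite !inE /tadj /= !andbF.
  rewrite E0 /N1 /FF !big_ord0.
  have -> : tree_vertices [::] = set0 :> {set V} by rewrite /tree_vertices big_nil.
  by rewrite setI0 cards0.
have hT' := tree_rcons_inv hT.
have [IH1 IH2 IH3 IH4] := IH hT' X.
set P := tree_vertices Hs.
set nw := H :\: P.
set Nn := nw :&: X.
set Y := H :&: X.
have hH : #|H| = r by rewrite -(copy_rcons_last Hs H) (copy_card hT) // size_rcons.
have [h [hh hPc hPadj]] : exists h, [/\ h = 0 \/ h = 2, #|H :&: P| = h &
    forall x y, x \in H :&: P -> y \in H :&: P -> x != y -> tadj Hs x y].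
  case: (posnP (size Hs)) => [s0|s0].
    have -> : P = set0.
      apply/setP => x; rewrite inE; apply/negP => /tree_verticesP [i]; by rewrite s0.
    by exists 0; rewrite setI0 cards0; split => //; [left | move=> x y; rewrite inE].
  have [a [b [ab e tab]]] := attach_last hT s0.
  exists 2; rewrite e cards2 ab; split => //; first by right.
  move=> x y; rewrite !in_set2 => /orP [] /eqP -> /orP [] /eqP ->; rewrite ?eqxx //.
  by rewrite tadj_sym.
set n := #|Nn|.
set e := #|Y :\: Nn|.
have hnw : #|nw| = r - h by rewrite cardsD hH hPc.
have NnY : Nn \subset Y by apply/subsetP => x; rewrite !inE => /andP [/andP [_ ->] ->].
have hY : #|Y| = n + e by rewrite -(cardsID Nn Y) (setIidPr NnY).
have YP : Y :\: Nn \subset H :&: P.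
  by apply/subsetP => x; rewrite /Y /Nn /nw !inE; case: (x \in X); case: (x \in P); case: (x \in H).
have he : e <= h by rewrite -hPc; apply: subset_leq_card.
have hn : n <= r - h by rewrite -hnw; apply: subset_leq_card; apply: subsetIl.
have eN1 : N1 (rcons Hs H) X = N1 Hs X + (Nn != set0).
  by have := sum_rcons Hs H (fun C Pr => (C :\: Pr) :&: X != set0); rewrite /N1 /newv /=.
have eFF : FF (rcons Hs H) X = FF Hs X + (H \subset X).
  by have := sum_rcons Hs H (fun C Pr => C \subset X); rewrite /FF /=.
have eV : #|X :&: tree_vertices (rcons Hs H)| = #|X :&: P| + n.
  rewrite tree_rcons -/P.
  have -> : X :&: (P :|: H) = (X :&: P) :|: Nn.
    by apply/setP => x; rewrite /Nn /nw !inE; case: (x \in X); case: (x \in P); case: (x \in H).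
  rewrite cardsU.
  have -> : X :&: P :&: Nn = set0.
    by apply/setP => x; rewrite /Nn /nw !inE; case: (x \in X); case: (x \in P); rewrite ?andbF.
  by rewrite cards0 subn0.
have eNn : (Nn != set0) = (0 < n) by rewrite /n card_gt0.
have hfull : (n == r - h) && (e == h) ==> (H \subset X).
  apply/implyP => /andP [/eqP en /eqP ee].
  have Nnw : Nn = nw by apply/eqP; rewrite eqEcard subsetIl -/n en hnw leqnn.
  have YPe : Y :\: Nn = H :&: P by apply/eqP; rewrite eqEcard YP -/e ee hPc leqnn.
  apply/subsetP => x hx; case xP: (x \in P).
    have : x \in Y :\: Nn by rewrite YPe inE hx xP.
    by rewrite /Y !inE => /andP [_ /andP [_ ->]].
  have : x \in Nn by rewrite Nnw /nw inE hx xP.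
  by rewrite /Nn inE => /andP [_ ->].
have hfull2 : (H \subset X) ==> (0 < n).
  apply/implyP => HX; rewrite /n.
  have -> : Nn = nw by apply/setIidPl/subsetP => x /setDP [xH _]; apply: (subsetP HX).
  rewrite hnw; case: hh => ->; lia.
have eE : E2 (rcons Hs H) X <= E2 Hs X + (n * (n + e) - n) + e * n.
  set NPa := setX Nn Y :\: [set (x, x) | x in Nn].
  set NPb := setX (Y :\: Nn) Nn.
  have cA : #|NPa| = n * (n + e) - n.
    rewrite cardsDS ?cardsX ?diag_card -?hY //.
    apply/subsetP => p /imsetP [x xN ->]; rewrite inE /= xN.
    by apply: (subsetP NnY).
  have cB : #|NPb| = e * n by rewrite cardsX.
  have sub : [set p : V * V | [&& p.1 \in X, p.2 \in X & tadj (rcons Hs H) p.1 p.2]] \subset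
     [set p : V * V | [&& p.1 \in X, p.2 \in X & tadj Hs p.1 p.2]] :|: (NPa :|: NPb).
    apply/subsetP => [[p1 p2]]; rewrite !inE /= tadj_rcons.
    case/and3P => p1X p2X /orP [old|/and3P [p12 p1H p2H]]; first by rewrite p1X p2X old.
    case p1P: (p1 \in P).
      case p2P: (p2 \in P).
        by rewrite p1X p2X hPadj ?inE ?p1H ?p2H ?p1P ?p2P.
      by rewrite p1H p2H p1X p2X /= !orbT.
    apply/orP; right; apply/orP; left; rewrite p1H p1X p2H p2X /= ?andbT.
    by apply/negP => /imsetP [x _ [e1 e2]]; rewrite e1 e2 eqxx in p12.
  rewrite /E2; apply: (leq_trans (subset_leq_card sub)).
  rewrite !cardsU -cA -cB; lia.
have ar := @arith r n e h _ r5 hn he hh hfull.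
rewrite eN1 eFF eV eNn; split.
- rewrite mulnDr mulnDr.
  move: ar IH1 eE; set A := n * (n + e) - n; set B := e * n; set C := (r + 1) * n.
  set D := (r + 1) * #|X :&: P|; exact: lin1.
- exact: lin2.
- exact: lin3 IH3 hn.
- exact: lin4.
Qed.


Definition nbrs (V : finType) (Hs : seq {set V}) (A : {set V}) (u : V) := [set w in A | tadj Hs w u].

Lemma cardsU_disj (T : finType) (A B : {set T}) : A :&: B = set0 -> #|A :|: B| = #|A| + #|B|.
Proof. by move=> h; rewrite cardsU h cards0 subn0. Qed.

Lemma tadj_irr (V : finType) (Hs : seq {set V}) x : tadj Hs x x = false.
Proof. by rewrite /tadj eqxx. Qed.

Lemma E2_add (V : finType) (Hs : seq {set V}) (A : {set V}) (u : V) : u \notin A ->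
  E2 Hs A + 2 * #|nbrs Hs A u| <= E2 Hs (u |: A).
Proof.
move=> uA.
set Po := [set p : V * V | [&& p.1 \in A, p.2 \in A & tadj Hs p.1 p.2]].
set L := [set (w, u) | w in nbrs Hs A u].
set R := [set (u, w) | w in nbrs Hs A u].
have cL : #|L| = #|nbrs Hs A u| by apply: card_imset => x y [].
have cR : #|R| = #|nbrs Hs A u| by apply: card_imset => x y [].
have d1 : L :&: R = set0.
  apply/setP => p; rewrite !inE; apply/negP => /andP [/imsetP [w wN ->] /imsetP [w' _ [e1 e2]]].
  by move: wN; rewrite inE e1 (negbTE uA).
have d2 : Po :&: (L :|: R) = set0.
  apply/setP => p; rewrite !inE; apply/negP => /andP [/and3P [p1 p2 _] /orP [/imsetP [w _ e]|/imsetP [w _ e]]];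
  by move: p1 p2; rewrite e /= (negbTE uA) ?andbF.
have sub : Po :|: (L :|: R) \subset [set p : V * V | [&& p.1 \in u |: A, p.2 \in u |: A & tadj Hs p.1 p.2]].
  apply/subsetP => p; rewrite !inE => /orP [/and3P [-> -> ->]|/orP [/imsetP [w wN ->]|/imsetP [w wN ->]]];
    rewrite ?orbT //=; move: wN; rewrite inE => /andP [-> t]; rewrite eqxx ?orbT //=.
  by rewrite tadj_sym.
rewrite /E2 -/Po; apply: leq_trans (subset_leq_card sub).
by rewrite !cardsU_disj // cL cR; lia.
Qed.

Definition mu (r c : nat) : nat := (c <= 1) + ((c <= r - 4) && (r != 5)).

Lemma mu_anti r c c' : c <= c' -> mu r c' <= mu r c.
Proof.
rewrite /mu => h.
have h1 : (c' <= 1) ==> (c <= 1) by apply/implyP; lia.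
have h2 : (c' <= r - 4) ==> (c <= r - 4) by apply/implyP; lia.
by move: h1 h2; case: (c' <= 1); case: (c <= 1); case: (c' <= r - 4); case: (c <= r - 4); case: (r != 5).
Qed.

Lemma mu_dec r c c' : 5 <= r -> (c = 1 \/ c = r - 4) -> c < c' -> mu r c' < mu r c.
Proof.
rewrite /mu => r5 hc h.
have h1 : (c' <= 1) ==> (c <= 1) by apply/implyP; lia.
have h2 : (c' <= r - 4) ==> (c <= r - 4) by apply/implyP; lia.
have h3 : ((c <= 1) && ~~ (c' <= 1)) || [&& (c <= r - 4), ~~ (c' <= r - 4) & r != 5].
  case: hc => hc; first by rewrite hc /=; apply/orP; left; lia.
  case: (r =P 5) => [e|ne]; first by apply/orP; left; subst; apply/andP; split; lia.
  by apply/orP; right; rewrite hc leqnn /=; apply/andP; split; [lia | apply/eqP].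
by move: h1 h2 h3; case: (c' <= 1); case: (c <= 1); case: (c' <= r - 4); case: (c <= r - 4); case: (r != 5).
Qed.

Lemma mu_le r c : mu r c <= 1 + (r != 5).
Proof. by rewrite /mu; case: (c <= 1); case: (c <= r - 4); case: (r != 5). Qed.

Lemma sum2 (I : finType) (P : pred I) (f g : I -> nat) i j :
  (forall k, P k -> f k <= g k) -> i != j -> P i -> P j -> f i < g i -> f j < g j ->
  \sum_(k | P k) f k + 2 <= \sum_(k | P k) g k.
Proof.
move=> fg ij Pi Pj fi fj.
have Pj' : P j && (j != i) by rewrite Pj eq_sym.
rewrite [\sum_(k | P k) f k](bigD1 i Pi) [\sum_(k | P k) g k](bigD1 i Pi) /=.
rewrite [\sum_(k | P k && (k != i)) f k](bigD1 j Pj') [\sum_(k | P k && (k != i)) g k](bigD1 j Pj') /=.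
have : \sum_(k | (P k && (k != i)) && (k != j)) f k <= \sum_(k | (P k && (k != i)) && (k != j)) g k.
  by apply: leq_sum => k /andP [/andP [Pk _] _]; apply: fg.
lia.
Qed.


Section Dyn.
Variables (r : nat) (V : finType) (Hs : seq {set V}).
Hypothesis hT : is_Kr_tree r Hs.
Hypothesis hr : 5 <= r.

Lemma adj_copy i x y : i < size Hs -> x \in copy Hs i -> y \in copy Hs i -> x != y -> tadj Hs x y.
Proof. by move=> hi hx hy xy; apply/tadjP; split => //; exists i => //; rewrite hx hy. Qed.

Lemma full_new i (A : {set V}) u : i < size Hs -> u \notin A -> copy Hs i \subset u |: A ->
  ~~ (copy Hs i \subset A) -> u \in copy Hs i /\ copy Hs i :\ u \subset nbrs Hs A u.
Proof.
move=> hi uA sub nsub.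
have uc : u \in copy Hs i.
  case uc: (u \in copy Hs i) => //; move/negP: nsub; case; apply/subsetP => x hx.
  move: (subsetP sub x hx); rewrite in_setU1 => /orP [/eqP ex|//].
  by move: hx; rewrite ex uc.
split => //; apply/subsetP => x; rewrite !inE => /andP [xu xc].
move: (subsetP sub x xc); rewrite in_setU1 (negbTE xu) /= => ->.
by apply: (adj_copy hi).
Qed.

Lemma copy_minus i u : i < size Hs -> u \in copy Hs i -> #|copy Hs i :\ u| = r - 1.
Proof. by move=> hi uc; have := cardsD1 u (copy Hs i); rewrite uc (copy_card hT hi); lia. Qed.

Lemma FF_special (A : {set V}) u : u \notin A -> (forall w, ~~ usual_ok r Hs A w) ->
  FF Hs (u |: A) <= FF Hs A.
Proof.
move=> uA nu; apply: leq_sum => i _.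
case hs: (copy Hs i \subset u |: A) => //=; case hA: (copy Hs i \subset A) => //.
have [uc sub] := full_new (ltn_ord i) uA hs (negbT hA).
have := nu u; rewrite /usual_ok uA /=.
have := subset_leq_card sub; rewrite (copy_minus (ltn_ord i) uc) /nbrs; lia.
Qed.

Lemma FF_usual (A : {set V}) u : u \notin A -> r - 2 <= #|nbrs Hs A u| ->
  FF Hs (u |: A) + (r - 2) <= FF Hs A + #|nbrs Hs A u|.
Proof.
move=> uA hk.
set T := [set i : 'I_(size Hs) | (copy Hs i \subset u |: A) && ~~ (copy Hs i \subset A)].
have hF : FF Hs (u |: A) <= FF Hs A + #|T|.
  have eT : \sum_(i < size Hs) ((i \in T) : nat) = #|T|.
    by rewrite -sum1_card [in RHS]big_mkcond /=; apply: eq_bigr => i _; case: (i \in T).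
  rewrite -eT /FF -big_split /=; apply: leq_sum => i _; rewrite inE.
  by case: (copy Hs i \subset u |: A); case: (copy Hs i \subset A).
case: (posnP #|T|) => [T0|Tpos]; first lia.
case/card_gt0P: Tpos => i1 i1T.
case: (@arg_minnP _ i1 (fun i => i \in T) (fun i : 'I_(size Hs) => val i) i1T) => i0 i0T min0.
have inTu i : i \in T -> u \in copy Hs i /\ copy Hs i :\ u \subset nbrs Hs A u.
  by rewrite inE => /andP [s ns]; apply: full_new.
have [u0 sub0] := inTu _ i0T.
set f := fun i : 'I_(size Hs) => odflt u [pick v in newv Hs i].
have fN (i : 'I_(size Hs)) : f i \in newv Hs i.
  rewrite /f; case: pickP => [v hv|none] //=.
  have [x hx] := newv_n0 hT hr (ltn_ord i); by move: (none x); rewrite hx.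
have lt0 i : i \in T :\ i0 -> val i0 < val i.
  rewrite in_setD1 => /andP [ne iT]; have := min0 i iT; rewrite leq_eqVlt => /orP [/eqP e|//].
  by move: ne; rewrite (val_inj e) eqxx.
have subf : f @: (T :\ i0) \subset nbrs Hs A u :\: copy Hs i0.
  apply/subsetP => v /imsetP [i iT ->].
  have lt := lt0 _ iT.
  have [ui _] := inTu i (subsetP (subsetDl T [set i0]) i iT).
  have := fN i; rewrite /newv inE => /andP [np fc].
  have pre := copy_sub_prefix Hs lt.
  have fu : f i != u by apply/eqP => e; rewrite e (subsetP pre u u0) in np.
  have : i \in T by move: iT; rewrite !inE => /andP [].
  rewrite inE => /andP [s _]; move: (subsetP s _ fc); rewrite in_setU1 (negbTE fu) /= => fA.
  rewrite !inE fA (adj_copy (ltn_ord i) fc ui fu) andbT /=.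
  rewrite ?andbT; apply/negP => hc; move: (subsetP pre _ hc); by rewrite (negbTE np).
have injf : {in T :\ i0 &, injective f}.
  move=> i j _ _ e; apply: val_inj; case: (ltngtP (val i) (val j)) => // h.
    by have := newv_disj h (fN i); rewrite e fN.
  by have := newv_disj h (fN j); rewrite -e fN.
have c1 := card_in_imset injf.
have c2 := cardsD1 i0 T; rewrite i0T in c2.
have c3 := cardsID (copy Hs i0) (nbrs Hs A u).
have c4 : r - 1 <= #|nbrs Hs A u :&: copy Hs i0|.
  rewrite -(copy_minus (ltn_ord i0) u0); apply: subset_leq_card.
  by apply/subsetP => x hx; rewrite inE (subsetP sub0 x hx) (subsetP (subsetDl _ _) x hx).
have c5 := subset_leq_card subf.
lia.
Qed.

End Dyn.


Lemma lin5 (EA EA' EAf FA FA' FAf m k X c : nat) : EA + 2 * k <= EA' -> FA' + c <= FA + k ->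
  EA' + X + 2 * FAf <= EAf + 2 * m + 2 * FA' -> EA + (2 * c + X) + 2 * FAf <= EAf + 2 * m + 2 * FA.
Proof. lia. Qed.

Lemma lin6 (r EA EA' EAf FA FA' FAf m k X : nat) : EA + 2 * k <= EA' -> FA' <= FA -> r - 3 <= k ->
  EA' + X + 2 * FAf <= EAf + 2 * m + 2 * FA' ->
  EA + (2 * (r - 2) + X) + 2 * FAf <= EAf + 2 * m.+1 + 2 * FA.
Proof. lia. Qed.

Section Main.
Variables (r : nat) (V : finType) (Hs : seq {set V}).
Hypothesis hT : is_Kr_tree r Hs.
Hypothesis hr : 5 <= r.
Variable Af : {set V}.
Hypothesis hterm : terminated r Hs Af.

Definition Phi (A : {set V}) :=
  \sum_(i < size Hs | newv Hs i :&: Af != set0) mu r #|copy Hs i :&: A|.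

Lemma Phi_anti (A B : {set V}) : A \subset B -> Phi B <= Phi A.
Proof.
move=> AB; apply: leq_sum => i _; apply: mu_anti; apply: subset_leq_card.
by apply: setIS.
Qed.

Lemma card_add1 (C A : {set V}) u : u \in C -> u \notin A -> #|C :&: (u |: A)| = #|C :&: A| + 1.
Proof.
move=> uC uA.
have -> : C :&: (u |: A) = u |: (C :&: A).
  apply/setP => x; rewrite !inE; case: (x =P u) => [->|] //=; by rewrite uC.
by rewrite cardsU1 inE (negbTE uA) andbF addnC.
Qed.

Lemma special_step (A : {set V}) u : (forall w, ~~ usual_ok r Hs A w) -> special_ok r Hs A u ->
  u |: A \subset Af ->
  [/\ u \notin A, u \in tree_vertices Hs, r - 3 <= #|nbrs Hs A u|, FF Hs (u |: A) <= FF Hs A &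
      Phi (u |: A) + 2 <= Phi A].
Proof.
move=> nu [i [j [a [b [hi hj ij ab [/and4P [ai bi aj bj] uab ci cj disj]]]]]] subAf.
have e43 : r - 4 + 1 = r - 3 by lia.
have e32 : r - 2 <= 1 + (r - 3) by lia.
have r4 : 0 < r - 4 by lia.
have zA z : z \in [set a; b] -> z \notin A.
  move=> zab; have := disjointFl disj zab; rewrite !inE => /negbT.
  rewrite negb_and => /orP [|//]; rewrite negb_or; move: zab; rewrite in_set2 => /orP [] /eqP ->;
  by rewrite ?ai ?bi.
have zc z : z \in [set a; b] -> (z \in copy Hs i) && (z \in copy Hs j).
  by rewrite in_set2 => /orP [] /eqP ->; rewrite ?ai ?aj ?bi ?bj.
have uA := zA u uab.
have /andP [ui uj] := zc u uab.
set W := (copy Hs i :&: A) :|: (copy Hs j :&: A).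
have WA : W \subset A by apply/subsetP => x; rewrite !inE => /orP [] /andP [].
have Wab x : x \in W -> x \notin [set a; b].
  move=> xW; apply/negP => xab; have := disjointFr disj; move/(_ x).
  by rewrite xab; move: xW; rewrite !inE => /orP [] /andP [-> ->]; rewrite ?orbT => /(_ isT).
have cW : #|W| = r - 3.
  rewrite cardsU_disj ?ci ?cj ?e43 //.
  apply/setP => x; rewrite !inE; apply/negP => /andP [/andP [xi xA] /andP [xj _]].
  have := subsetP (two_copies hT hr hi hj ij ab ai bi aj bj) x; rewrite inE xi xj => /(_ isT) xab.
  by have := zA x xab; rewrite xA.
have Wn (B : {set V}) z : A \subset B -> z \in [set a; b] -> W \subset nbrs Hs B z.
  move=> AB zab; apply/subsetP => x xW; rewrite inE (subsetP AB _ (subsetP WA _ xW)) /=.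
  have xz : x != z by apply/eqP => e; move: (Wab x xW); rewrite e zab.
  have /andP [zi zj] := zc z zab.
  by move: xW; rewrite !inE => /orP [] /andP [xc _]; [apply: (adj_copy hi) | apply: (adj_copy hj)].
have uV : u \in tree_vertices Hs by apply/tree_verticesP; exists i.
have uAf : u \in Af by apply: (subsetP subAf); rewrite in_setU1 eqxx.
have AAf : A \subset Af by apply: subset_trans subAf; apply: subsetUr.
have abAf z : z \in [set a; b] -> z \in Af.
  move=> zab; case: (z =P u) => [->|zu] //.
  apply/negPn/negP => zAf; have := hterm.1 z; rewrite /usual_ok zAf /=.
  have sub : u |: W \subset nbrs Hs Af z.
    apply/subsetP => x; rewrite in_setU1 => /orP [/eqP ->|xW]; last by apply: (subsetP (Wn _ _ AAf zab)).
    rewrite inE uAf /=; have /andP [zi _] := zc z zab; apply: (adj_copy hi) => //.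
    by apply/eqP => e; apply: zu; rewrite e.
  have h1 := subset_leq_card sub; rewrite cardsU1 cW in h1.
  have uW : u \notin W by apply/negP => /(subsetP WA); rewrite (negbTE uA).
  by rewrite uW in h1; rewrite /nbrs (leq_trans e32 h1).
have newA k : k < size Hs -> a \in copy Hs k -> b \in copy Hs k -> 0 < #|copy Hs k :&: A| ->
    newv Hs k :&: Af != set0.
  move=> hk ak bk /card_gt0P [x]; rewrite inE => /andP [xk xA].
  have xab : x \notin [set a; b] by apply/negP => /zA; rewrite xA.
  move: xab; rewrite in_set2 negb_or => /andP [xa xb].
  by apply: (three_new hT hk ab xa xb ak bk xk (abAf a _) (abAf b _) (subsetP AAf _ xA));
    rewrite in_set2 eqxx ?orbT.
split => //.
- by apply: leq_trans (subset_leq_card (Wn _ _ (subxx A) uab)); rewrite cW.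
- exact: (FF_special hT hr uA nu).
pose io := Ordinal hi; pose jo := Ordinal hj.
apply: (@sum2 _ _ _ _ io jo).
- by move=> k _; apply: mu_anti; apply: subset_leq_card; apply: setIS; apply: subsetUr.
- by apply/negP => /eqP [] /eqP; rewrite (negbTE ij).
- by apply: newA => //=; rewrite ci.
- by apply: newA => //=; rewrite cj.
- by rewrite /= (card_add1 ui uA); apply: mu_dec => //; [right | rewrite ci addn1].
- by rewrite /= (card_add1 uj uA); apply: mu_dec => //; [left | rewrite cj].
Qed.


Lemma usual_V (A : {set V}) u : usual_ok r Hs A u -> u \in tree_vertices Hs.
Proof.
case/andP => _ hk.
have : 0 < #|nbrs Hs A u| by apply: leq_trans hk; rewrite subn_gt0; apply: leq_trans hr.
case/card_gt0P => w; rewrite inE => /andP [_ /tadjP [_ [i hi /andP [_ ui]]]].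
by apply/tree_verticesP; exists i.
Qed.

Lemma run_inv : forall s (A : {set V}), valid_run r Hs A s -> A :|: [set x in s] = Af ->
  A \subset tree_vertices Hs ->
  exists m, [/\ 2 * m <= Phi A,
     E2 Hs A + 2 * (r - 2) * size s + 2 * FF Hs Af <= E2 Hs Af + 2 * m + 2 * FF Hs A,
     #|Af| = #|A| + size s & Af \subset tree_vertices Hs].
Proof.
elim => [|u s IH] A /=.
  move=> _ eA AV; have eA' : Af = A by rewrite -eA; apply/setP => x; rewrite !inE orbF.
  exists 0; split => //; rewrite ?eA' ?muln0 ?addn0 //.
move=> [st vr] eA AV.
have eA' : (u |: A) :|: [set x in s] = Af.
  rewrite -eA; apply/setP => x; rewrite !inE.
  by case: (x == u); case: (x \in A).
have subAf : u |: A \subset Af by rewrite -eA'; apply: subsetUl.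
have uV : u \in tree_vertices Hs.
  case: st => [us|[_ [i [j [a [b [hi _ _ _ [/and4P [ai bi _ _] uab _ _ _]]]]]]]].
    exact: (usual_V us).
  apply/tree_verticesP; exists i => //.
  by move: uab; rewrite in_set2 => /orP [] /eqP ->.
have AV' : u |: A \subset tree_vertices Hs by rewrite subUset sub1set uV AV.
have [m [h1 h2 h3 h4]] := IH _ vr eA' AV'.
case: st => [us | [nu sp]].
  have /andP [uA hk] := us.
  have hE := E2_add Hs uA.
  have hF := FF_usual hT hr uA hk.
  have hP := Phi_anti (subsetUr [set u] A).
  exists m; split => //.
  - exact: leq_trans h1 hP.
  - by rewrite mulnS; apply: lin5 hE hF h2.
  - by rewrite h3 cardsU1 uA add1n addSnnS.
have [uA _ hk hF hP] := special_step nu sp subAf.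
have hE := E2_add Hs uA.
exists m.+1; split => //.
- by move: h1 hP; rewrite mulnS; lia.
- by rewrite mulnS; apply: lin6 hE hF hk h2.
- by rewrite h3 cardsU1 uA add1n addSnnS.
Qed.

End Main.

Lemma final_arith (r a sS L N m E2S E2A FS FA : nat) :
  5 <= r -> a = sS + L -> E2S + 2 * (r - 2) * L + 2 * FA <= E2A + 2 * m + 2 * FS ->
  2 * m <= (1 + (r != 5)) * N -> E2A + 2 * N <= (r + 1) * a + 2 * FA -> a <= r * N -> FS <= sS ->
  a <= 2 * r * (r - 1) * sS.
Proof.
move=> r5 ea h2 h1 s1 s3 fs.
case: (r =P 5) => [e|ne].
  subst r; rewrite /= in h1; lia.
have r6 : 6 <= r by lia.
have rn : (r != 5) = true by apply/eqP.
move: h1; rewrite rn /= => h1.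
have h : 2 * (r - 2) * L <= (r + 1) * a + 2 * sS by lia.
have h' : (r - 5) * L <= (r + 3) * sS.
  move: h; rewrite ea. nia.
have hL : L <= (r + 3) * sS by apply: leq_trans h'; apply: leq_pmull; lia.
rewrite ea. nia.
Qed.


Lemma Phi_le r (V : finType) (Hs : seq {set V}) (Af A : {set V}) :
  Phi r Hs Af A <= (1 + (r != 5)) * N1 Hs Af.
Proof.
rewrite /Phi /N1 big_distrr /= big_mkcond /=; apply: leq_sum => i _.
by case: ifP => _; rewrite ?muln1 ?muln0 ?mu_le.
Qed.

Theorem lemma6p5 (r : nat) (hr : 5 <= r) :
  exists C : nat,
    forall (V : finType) (Hs : seq {set V}), is_Kr_tree r Hs ->
    forall (S : {set V}), S \subset tree_vertices Hs ->
    forall run : seq V,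
      valid_run r Hs S run ->
      terminated r Hs (final_set S run) ->
      #|final_set S run| <= C * #|S|.
Proof.
exists (2 * r * (r - 1)) => V Hs hT S SV run vr term.
have [m [h1 h2 h3 h4]] := run_inv hT hr term vr erefl SV.
have [s1 _ s3 _] := static hr hT (final_set S run).
have [_ t2 _ t4] := static hr hT S.
rewrite (setIidPl h4) in s1 s3.
have fs : FF Hs S <= #|S|.
  apply: leq_trans t4 (leq_trans t2 _); apply: subset_leq_card; apply: subsetIl.
exact: (@final_arith r _ _ _ _ _ _ _ _ _ hr h3 h2 (leq_trans h1 (Phi_le _ _ _ _)) s1 s3 fs).
Qed.
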